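(* Proposition C implies each of Propositions A, B (each in its $\#$-decreasing and its lex $\#$-decreasing form), C and D. Proposition A for $\#$-decreasing is implied by each of these forms. Moreover each of these forms is equivalent to the corresponding form in which the bound $k^k$ is replaced by $\mathrm{ot}(k)$.
   Context: $\mathbb{N}=\{0,1,\dots\}$, $[n]=\{0,\dots,n-1\}$; for $x\in\mathbb{N}^k$, $\min(x),|x|$ are least and greatest coordinates. A function assignment for $S$ ($S=\mathbb{N}^k$ or $[n]^k$) assigns to each finite $A\subseteq S$ a function $U(A):A\to A$ (identified with its graph). Regressive value of $F$ on $B$: $y=F(x)$, $x\in B$, $|y|<\min(x)$. $\#$-decreasing: for all finite $A\subseteq S$, $x\in S$, either $U(A)\subseteq U(A\cup\{x\})$ or there is $y$ with $|y|>|x|$ and $|U(A)(y)|>|U(A\cup\{x\})(y)|$. Lex $\#$-decreasing: same with the comparisons replaced by strict lexicographic order: $y>_{\mathrm{lex}}x$ and $U(A)(y)>_{\mathrm{lex}}U(A\cup\{x\})(y)$. A strict order is transitive and irreflexive; $x\le_c y$ iff $x_i\le y_i$ for all $i$; a strict order $<$ on $S$ is upward iff $x\le_c y$ implies not $y<x$. For strict orders $<_1,<_2$, $U$ is $<_1,<_2$-$\#$-decreasing iff for all finite $A$, $x$: either $U(A)\subseteq U(A\cup\{x\})$ or there is $y>_1x$ with $U(A)(y)>_2U(A\cup\{x\})(y)$. Proposition A: for all $k,p>0$ and every $\#$-decreasing (resp. lex $\#$-decreasing) function assignment $U$ for $\mathbb{N}^k$ there exist finite $A\subseteq\mathbb{N}^k$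 and $E\subseteq\mathbb{N}$, $|E|=p$, $E^k\subseteq A$, such that $U(A)$ has at most $k^k$ regressive values on $E^k$. Proposition B: for all $k,p>0$ there is $m$ such that for all $n\ge m$ and every $\#$-decreasing (resp. lex $\#$-decreasing) function assignment $U$ for $[n]^k$ there exist $A\subseteq[n]^k$ and $E$, $|E|=p$, $E^k\subseteq A$, with $U(A)$ having at most $k^k$ regressive values on $E^k$. Proposition C: for all $k,p>0$, all upward orders $<_1,<_2$ on $\mathbb{N}^k$ and every $<_1,<_2$-$\#$-decreasing function assignment $U$ for $\mathbb{N}^k$, the conclusion of Proposition A holds. Proposition D: for all $k,p>0$ there is $m$ such that for all $n\ge m$, all upward orders $<_1,<_2$ on $[n]^k$ and every $<_1,<_2$-$\#$-decreasing function assignment for $[n]^k$, the conclusion of Proposition B holds. $\mathrm{ot}(k)$ is the number of order types of elements of $\mathbb{N}^k$ (where $x,y$ have the same order type iff $x_i<x_j\Leftrightarrow y_i<y_j$ for all $i,j$). *)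

(* Defs.v *)
From HB Require Import structures.
From mathcomp Require Import all_boot all_order.
From mathcomp Require Import finmap.
From mathcomp Require Import boolp.
Set Implicit Arguments. Unset Strict Implicit. Unset Printing Implicit Defensive.
Local Open Scope fset_scope.

(* |x| : greatest coordinate; min(x) : least coordinate (for k > 0). *)
Definition mxc k (x : k.-tuple nat) : nat := \max_(i < k) tnth x i.
Definition mnc k (x : k.-tuple nat) : nat := \big[minn/mxc x]_(i < k) tnth x i.

Definition inbox (n k : nat) : pred (k.-tuple nat) := fun x => [forall i, tnth x i < n].
Arguments inbox : clear implicits.

(* A function assignment: U A is a function whose restriction to A is U(A) : A -> A *)
Definition fasgn k := {fset k.-tuple nat} -> k.-tuple nat -> k.-tuple nat.

Definition is_fa k (S : pred (k.-tuple nat)) (U : fasgn k) : Prop :=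
  forall A : {fset k.-tuple nat}, {subset A <= S} ->
    forall y, y \in A -> U A y \in A.

Definition graph_sub k (U : fasgn k) (A : {fset k.-tuple nat}) (x : k.-tuple nat) : Prop :=
  forall y, y \in A -> U A y = U (x |` A) y.

(* <1,<2-#-decreasing (lt1 x y means x <1 y) *)
Definition ord_dec k (S : pred (k.-tuple nat)) (lt1 lt2 : rel (k.-tuple nat))
  (U : fasgn k) : Prop :=
  forall A : {fset k.-tuple nat}, {subset A <= S} -> forall x, x \in S ->
    graph_sub U A x \/
    exists2 y, y \in A & lt1 x y /\ lt2 (U (x |` A) y) (U A y).

(* comparison by greatest coordinate: used for #-decreasing *)
Definition hash_lt k : rel (k.-tuple nat) := fun x y => mxc x < mxc y.
Definition lex_lt k : rel (k.-tuple nat) := fun x y =>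
  [exists i : 'I_k, [forall j : 'I_k, (j < i) ==> (tnth x j == tnth y j)]
                    && (tnth x i < tnth y i)].

Definition cle k (x y : k.-tuple nat) : bool := [forall i, tnth x i <= tnth y i].
Definition strict_on k (S : pred (k.-tuple nat)) (r : rel (k.-tuple nat)) : Prop :=
  (forall x, x \in S -> ~~ r x x) /\
  (forall x y z, x \in S -> y \in S -> z \in S -> r x y -> r y z -> r x z).
Definition upward_on k (S : pred (k.-tuple nat)) (r : rel (k.-tuple nat)) : Prop :=
  strict_on S r /\ (forall x y, x \in S -> y \in S -> cle x y -> ~~ r y x).

Definition cube k (E : {fset nat}) (x : k.-tuple nat) : bool := [forall i, tnth x i \in E].

Definition regvals k (U : fasgn k) (A : {fset k.-tuple nat}) (E : {fset nat})
  : {fset k.-tuple nat} :=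
  [fset U A x | x in A & cube E x && (mxc (U A x) < mnc x)].

Definition concl k (p bnd : nat) (S : pred (k.-tuple nat)) (U : fasgn k) : Prop :=
  exists (A : {fset k.-tuple nat}) (E : {fset nat}),
    [/\ {subset A <= S}, #|` E| = p, (forall x, cube E x -> x \in A)
      & #|` regvals U A E| <= bnd].

Definition PropA (lt : forall k, rel (k.-tuple nat)) (b : nat -> nat) : Prop :=
  forall k p, 0 < k -> 0 < p -> forall U : fasgn k,
    is_fa predT U -> ord_dec predT (lt k) (lt k) U -> concl p (b k) predT U.

Definition PropB (lt : forall k, rel (k.-tuple nat)) (b : nat -> nat) : Prop :=
  forall k p, 0 < k -> 0 < p -> exists m, forall n, m <= n -> forall U : fasgn k,
    is_fa (inbox n k) U -> ord_dec (inbox n k) (lt k) (lt k) U ->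
    concl p (b k) (inbox n k) U.

Definition PropC (b : nat -> nat) : Prop :=
  forall k p, 0 < k -> 0 < p -> forall lt1 lt2 : rel (k.-tuple nat),
    upward_on predT lt1 -> upward_on predT lt2 -> forall U : fasgn k,
    is_fa predT U -> ord_dec predT lt1 lt2 U -> concl p (b k) predT U.

Definition PropD (b : nat -> nat) : Prop :=
  forall k p, 0 < k -> 0 < p -> exists m, forall n, m <= n ->
    forall lt1 lt2 : rel (k.-tuple nat),
    upward_on (inbox n k) lt1 -> upward_on (inbox n k) lt2 -> forall U : fasgn k,
    is_fa (inbox n k) U -> ord_dec (inbox n k) lt1 lt2 U ->
    concl p (b k) (inbox n k) U.

Definition kk (k : nat) : nat := k ^ k.

(* order type of x, as the table of comparisons x_i < x_j *)
Definition otype k (x : k.-tuple nat) : {ffun 'I_k * 'I_k -> bool} :=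
  [ffun ij => tnth x ij.1 < tnth x ij.2].
Definition ot (k : nat) : nat :=
  #|[set f : {ffun 'I_k * 'I_k -> bool} | `[< exists x : k.-tuple nat, f = otype x >]]|.

Arguments hash_lt : clear implicits.
Arguments lex_lt : clear implicits.

(* Main.v *)
From HB Require Import structures.
From mathcomp Require Import all_boot all_order.
From mathcomp Require Import finmap boolp zify.
From Stdlib Require Import Lia ClassicalEpsilon Classical_Prop Classical_Pred_Type.
Require Import Defs.
Set Implicit Arguments. Unset Strict Implicit. Unset Printing Implicit Defensive.
Local Open Scope fset_scope.

Lemma upward_hash k S : upward_on S (hash_lt k).
Proof.
split; first split.
- by move=> x _; rewrite /hash_lt ltnn.
- by move=> x y z _ _ _; rewrite /hash_lt; apply: ltn_trans.
move=> x y _ _ /forallP H; rewrite /hash_lt -leqNgt.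
apply/bigmax_leqP => i _; apply: (leq_trans (H i)).
exact: (leq_bigmax_cond (F := fun i => tnth y i)).
Qed.

Lemma lex_ltP k (x y : k.-tuple nat) :
  reflect (exists i : 'I_k, (forall j : 'I_k, j < i -> tnth x j = tnth y j) /\ tnth x i < tnth y i)
          (lex_lt k x y).
Proof.
apply: (iffP existsP) => [[i /andP[/forallP H1 H2]]|[i [H1 H2]]]; exists i.
  by split=> // j ji; apply/eqP; move: (H1 j); rewrite ji.
by rewrite H2 andbT; apply/forallP => j; apply/implyP => ji; rewrite H1.
Qed.

Lemma upward_lex k S : upward_on S (lex_lt k).
Proof.
split; first split.
- move=> x _; apply/lex_ltP => -[i [_]]; by rewrite ltnn.
- move=> x y z _ _ _ /lex_ltP[i [H1 H2]] /lex_ltP[i' [H1' H2']]; apply/lex_ltP.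
  case: (ltngtP i i') => [ii'|i'i|/val_inj ii'].
  + exists i; split; first by move=> j ji; rewrite H1 // H1' // (ltn_trans ji).
    by rewrite -(H1' i ii').
  + exists i'; split; first by move=> j ji; rewrite H1 ?H1' // (ltn_trans ji).
    by rewrite (H1 i' i'i).
  + subst i'; exists i; split; first by move=> j ji; rewrite H1 // H1'.
    exact: ltn_trans H2 H2'.
move=> x y _ _ /forallP H; apply/negP => /lex_ltP[i [_ H2]].
by move: (H i); rewrite leqNgt H2.
Qed.

Lemma concl_mono k p b b' S (U : fasgn k) : b <= b' -> concl p b S U -> concl p b' S U.
Proof.
move=> bb [A [E [H1 H2 H3 H4]]]; exists A, E; split=> //; exact: leq_trans H4 bb.
Qed.

Lemma is_fa_sub k (S S' : pred (k.-tuple nat)) U :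
  {subset S' <= S} -> is_fa S U -> is_fa S' U.
Proof. by move=> sub H A AS' y yA; apply: H => // z /AS' /sub. Qed.

Lemma ord_dec_sub k (S S' : pred (k.-tuple nat)) lt1 lt2 U :
  {subset S' <= S} -> ord_dec S lt1 lt2 U -> ord_dec S' lt1 lt2 U.
Proof. by move=> sub H A AS' x xS; apply: H; [move=> z /AS' /sub|apply: sub]. Qed.

Lemma strict_sub k (S S' : pred (k.-tuple nat)) r :
  {subset S' <= S} -> strict_on S r -> strict_on S' r.
Proof.
move=> sub [H1 H2]; split; first by move=> x /sub; apply: H1.
by move=> x y z /sub xS /sub yS /sub zS; apply: H2.
Qed.

Lemma upward_sub k (S S' : pred (k.-tuple nat)) r :
  {subset S' <= S} -> upward_on S r -> upward_on S' r.
Proof.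
move=> sub [H1 H2]; split; first exact: strict_sub H1.
by move=> x y /sub xS /sub yS; apply: H2.
Qed.

Lemma concl_sub k p b (S S' : pred (k.-tuple nat)) U :
  {subset S' <= S} -> concl p b S' U -> concl p b S U.
Proof. by move=> sub [A [E [H1 H2 H3 H4]]]; exists A, E; split=> // x /H1 /sub. Qed.

Lemma PropB_A lt b : PropB lt b -> PropA lt b.
Proof.
move=> HB k p k0 p0 U Hfa Hdec; have [m Hm] := HB k p k0 p0.
apply: (@concl_sub _ _ _ _ (inbox m k)) => //.
apply: Hm => //; [exact: is_fa_sub Hfa|exact: ord_dec_sub Hdec].
Qed.

Lemma PropD_C b : PropD b -> PropC b.
Proof.
move=> HD k p k0 p0 lt1 lt2 u1 u2 U Hfa Hdec; have [m Hm] := HD k p k0 p0.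
apply: (@concl_sub _ _ _ _ (inbox m k)) => //.
apply: Hm => //; [exact: upward_sub u1|exact: upward_sub u2|
  exact: is_fa_sub Hfa|exact: ord_dec_sub Hdec].
Qed.

Lemma PropC_A_hash b : PropC b -> PropA hash_lt b.
Proof.
move=> HC k p k0 p0 U Hfa Hdec; apply: (HC _ _ _ _ (hash_lt k) (hash_lt k)) => //; exact: upward_hash.
Qed.

Lemma PropC_A_lex b : PropC b -> PropA lex_lt b.
Proof.
move=> HC k p k0 p0 U Hfa Hdec; apply: (HC _ _ _ _ (lex_lt k) (lex_lt k)) => //; exact: upward_lex.
Qed.

Lemma PropD_B_hash b : PropD b -> PropB hash_lt b.
Proof.
move=> HD k p k0 p0; have [m Hm] := HD k p k0 p0; exists m => n mn U Hfa Hdec.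
by apply: (Hm n mn (hash_lt k) (hash_lt k)) => //; exact: upward_hash.
Qed.

Lemma PropD_B_lex b : PropD b -> PropB lex_lt b.
Proof.
move=> HD k p k0 p0; have [m Hm] := HD k p k0 p0; exists m => n mn U Hfa Hdec.
by apply: (Hm n mn (lex_lt k) (lex_lt k)) => //; exact: upward_lex.
Qed.

Lemma PropA_mono lt b b' : (forall k, b k <= b' k) -> PropA lt b -> PropA lt b'.
Proof. by move=> bb H k p k0 p0 U h1 h2; apply: concl_mono (bb k) _; apply: H. Qed.
Lemma PropB_mono lt b b' : (forall k, b k <= b' k) -> PropB lt b -> PropB lt b'.
Proof.
move=> bb H k p k0 p0; have [m Hm] := H k p k0 p0; exists m => n mn U h1 h2.
by apply: concl_mono (bb k) _; apply: Hm.
Qed.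
Lemma PropC_mono b b' : (forall k, b k <= b' k) -> PropC b -> PropC b'.
Proof. by move=> bb H k p k0 p0 l1 l2 u1 u2 U h1 h2; apply: concl_mono (bb k) (H k p k0 p0 l1 l2 u1 u2 U h1 h2). Qed.
Lemma PropD_mono b b' : (forall k, b k <= b' k) -> PropD b -> PropD b'.
Proof.
move=> bb H k p k0 p0; have [m Hm] := H k p k0 p0; exists m => n mn l1 l2 u1 u2 U h1 h2.
exact: concl_mono (bb k) (Hm n mn l1 l2 u1 u2 U h1 h2).
Qed.

Definition cnt k (x : k.-tuple nat) (i : 'I_k) := #|[set j | tnth x j < tnth x i]|.

Lemma cnt_lt k (x : k.-tuple nat) i j : (tnth x i < tnth x j) = (cnt x i < cnt x j).
Proof.
rewrite /cnt; case: ltnP => h.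
  apply/esym/proper_card/properP; split.
    by apply/subsetP => l; rewrite !inE => /ltn_trans; apply.
  by exists i; rewrite !inE ?ltnn.
apply/esym/negbTE; rewrite -leqNgt; apply/subset_leq_card/subsetP => l.
by rewrite !inE => /leq_trans; apply.
Qed.

Lemma cnt_bound k (x : k.-tuple nat) i : cnt x i < k.
Proof.
rewrite /cnt; apply: (@leq_trans #|'I_k|); last by rewrite card_ord.
rewrite -cardsT; apply/proper_card/properP; split.
  exact: subsetT.
by exists i; rewrite !inE ?ltnn.
Qed.

Lemma ot_le_kk k : ot k <= kk k.
Proof.
rewrite /ot /kk; case: k => [|k].
  apply: leq_trans (max_card _) _; rewrite card_ffun card_prod card_ord /=.
  by rewrite card_bool.
set S := [set f | _].
pose g (f : {ffun 'I_k.+1 * 'I_k.+1 -> bool}) : {ffun 'I_k.+1 -> 'I_k.+1} :=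
  [ffun i => inord #|[set j | f (j, i)]|].
have gE x i : g (otype x) i = inord (cnt x i).
  rewrite ffunE; congr inord; apply: eq_card => j; by rewrite !inE ffunE.
rewrite -(@card_in_imset _ _ g).
  apply: leq_trans (max_card _) _; by rewrite card_ffun !card_ord.
move=> f1 f2; rewrite !inE => /asboolP[x ->] /asboolP[y ->] eqg.
apply/ffunP => -[i j]; rewrite !ffunE /= !cnt_lt.
have e z : cnt x z = cnt y z.
  move/ffunP: eqg => /(_ z); rewrite !gE => /(congr1 val).
  by rewrite /= !inordK // cnt_bound.
by rewrite !e.
Qed.

Lemma fsub_card (q : nat) (X : {fset nat}) : q <= #|` X| -> exists Y, Y `<=` X /\ #|` Y| = q.
Proof.
elim: q => [|q IH] h; first by exists fset0; rewrite fsub0set cardfs0.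
have [Y [YX cY]] := IH (ltnW h).
have : ~~ (X `<=` Y).
  apply/negP => /fsubset_leq_card; rewrite cY; lia.
case/fsubsetPn => x xX xY; exists (x |` Y); split.
  by rewrite fsubUset fsub1set xX YX.
by rewrite cardfsU1 xY cY.
Qed.

Lemma fset_min (X : {fset nat}) : X != fset0 -> exists2 a, a \in X & forall b, b \in X -> a <= b.
Proof.
case: (fset_0Vmem X) => [->|[x xX]]; first by rewrite eqxx.
have ex : exists n, n \in X by exists x.
move=> _; exists (ex_minn ex); first by case: ex_minnP.
move=> b bX; case: ex_minnP => m _; exact.
Qed.

Definition bounded_on (d C : nat) (X : {fset nat}) (f : {fset nat} -> nat) :=
  forall S, S `<=` X -> #|` S| = d -> f S < C.

Definition mono_on (d : nat) (Y : {fset nat}) (f : {fset nat} -> nat) (c : nat) :=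
  forall S, S `<=` Y -> #|` S| = d -> f S = c.

Definition ramsey_stmt d := forall C q, exists N, forall X : {fset nat}, N <= #|` X| ->
  forall f, bounded_on d C X f -> exists Y, [/\ Y `<=` X, #|` Y| = q & exists c, mono_on d Y f c].

Lemma pigeon (C q : nat) (Z : {fset nat}) (col : nat -> nat) :
  (forall z, z \in Z -> col z < C.+1) -> C.+1 * q <= #|` Z| ->
  exists c, q <= #|` [fset z in Z | col z == c]|.
Proof.
elim: C Z => [|C IH] Z hcol hcard.
  exists 0; suff -> : [fset z in Z | col z == 0] = Z by lia.
  apply/fsetP => z; rewrite !inE; case zZ: (z \in Z) => //=.
  by move: (hcol z zZ); rewrite ltnS leqn0.
case: (leqP q #|` [fset z in Z | col z == C.+1]|) => h; first by exists C.+1.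
set Zc := [fset z in Z | col z == C.+1] in h.
have sub : Zc `<=` Z by apply/fsubsetP => z; rewrite !inE => /andP[].
have h1 : forall z, z \in Z `\` Zc -> col z < C.+1.
  move=> z; rewrite in_fsetD => /andP[zZc zZ]; move: (hcol z zZ); rewrite ltnS leq_eqVlt.
  by move: zZc; rewrite /Zc !inE zZ /= => /negbTE ->.
have h2 : C.+1 * q <= #|` Z `\` Zc| by rewrite cardfsDS //; lia.
have [c hc] := IH (Z `\` Zc) h1 h2.
exists c; apply: leq_trans hc _; apply/fsubset_leq_card/fsubsetP => z.
by rewrite !inE => /andP[/andP[_ ->] ->].
Qed.

Lemma ramsey d : ramsey_stmt d.
Proof.
elim: d => [|d IHd] C q.
  exists q => X hX f _; have [Y [YX cY]] := fsub_card hX.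
  exists Y; split=> //; exists (f fset0) => S _ /cardfs0_eq -> //.
have H : forall t, exists N, forall X : {fset nat}, N <= #|` X| ->
   forall f, bounded_on d.+1 C X f -> exists Z (col : nat -> nat),
   [/\ Z `<=` X, #|` Z| = t, (forall z, z \in Z -> col z < C.+1) &
   forall a, a \in Z -> forall S, S `<=` Z -> (forall s, s \in S -> a < s) ->
     #|` S| = d -> f (a |` S) = col a].
  elim=> [|t [Nt HNt]].
    exists 0 => X _ f _; exists fset0, (fun _ => 0); split.
    - exact: fsub0set.
    - exact: cardfs0.
    - by move=> z; rewrite in_fset0.
    - by move=> z; rewrite in_fset0.
  have [N' HN'] := IHd C Nt; exists N'.+1 => X hX f hf.
  have X0 : X != fset0 by rewrite -cardfs_gt0; lia.
  have [a0 a0X a0min] := fset_min X0.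
  set X' := X `\ a0.
  have cX' : N' <= #|` X'|.
  by move: hX; rewrite (cardfsD1 a0 X) a0X add1n ltnS.
  have hb : bounded_on d C X' (fun S => f (a0 |` S)).
    move=> S SX' cS; apply: hf.
      rewrite fsubUset fsub1set a0X /=; apply: fsubset_trans SX' _; exact: fsubD1set.
    rewrite cardfsU1 cS; have -> // : a0 \notin S.
    by apply/negP => /(fsubsetP SX'); rewrite !inE eqxx.
  have [Y0 [Y0X' cY0 [c0 mc0]]] := HN' X' cX' _ hb.
  have Y0X : Y0 `<=` X by apply: fsubset_trans Y0X' _; exact: fsubD1set.
  have hb' : bounded_on d.+1 C Y0 f.
    by move=> S SY0; apply: hf; apply: fsubset_trans SY0 _.
  have [Z' [col' [Z'Y0 cZ' hcol' hZ']]] := HNt Y0 (eq_leq (esym cY0)) f hb'.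
  have a0Z' : a0 \notin Z'.
    by apply/negP => /(fsubsetP Z'Y0) /(fsubsetP Y0X'); rewrite !inE eqxx.
  exists (a0 |` Z'), (fun z => if z == a0 then (if c0 < C then c0 else C) else col' z).
  split.
  - by rewrite fsubUset fsub1set a0X; apply: fsubset_trans Z'Y0 _.
  - by rewrite cardfsU1 a0Z' cZ'.
  - move=> z; case: (z =P a0) => [_|ne]; first by case: ifP => //; lia.
    by rewrite !inE => /orP[/eqP//|]; apply: hcol'.
  move=> a; rewrite in_fset1U => /orP[/eqP ->|aZ'] S SZ Sgt cS.
    have a0S : a0 \notin S by apply/negP => /Sgt; rewrite ltnn.
    have SZ' : S `<=` Z'.
      apply/fsubsetP => s sS; move/fsubsetP: SZ => /(_ s sS); rewrite in_fset1U.
      by case/orP => // /eqP se; move: a0S; rewrite -se sS.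
    rewrite eqxx (mc0 S (fsubset_trans SZ' Z'Y0) cS).
    have -> // : c0 < C. rewrite -(mc0 S (fsubset_trans SZ' Z'Y0) cS); apply: hf.
      rewrite fsubUset fsub1set a0X /=; apply: fsubset_trans Y0X.
      exact: fsubset_trans SZ' Z'Y0.
    by rewrite cardfsU1 a0S cS.
  have aa0 : a0 < a.
    have aX' : a \in X' by apply: (fsubsetP Y0X'); apply: (fsubsetP Z'Y0).
    move: aX'; rewrite !inE => /andP[ne aX]; rewrite ltn_neqAle eq_sym ne.
    exact: a0min.
  have -> : (a == a0) = false by apply/negbTE; rewrite neq_ltn aa0 orbT.
  apply: hZ' => //.
  apply/fsubsetP => s sS; move/fsubsetP: SZ => /(_ s sS); rewrite in_fset1U.
  case/orP => // /eqP se; move: (Sgt s sS); rewrite se; lia.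
have [N HN] := H (C.+1 * q); exists N => X hX f hf.
have [Z [col [ZX cZ hcol hZ]]] := HN X hX f hf.
have [c hc] := pigeon hcol (eq_leq (esym cZ)).
have [W [WZc cW]] := fsub_card hc.
have WZ : W `<=` Z by apply: fsubset_trans WZc _; apply/fsubsetP => z; rewrite !inE => /andP[].
exists W; split=> //; first exact: fsubset_trans WZ ZX.
exists c => S SW cS.
have S0 : S != fset0 by rewrite -cardfs_gt0 cS.
have [b bS bmin] := fset_min S0.
have bW := fsubsetP SW b bS.
have colb : col b = c by move: (fsubsetP WZc b bW); rewrite !inE => /andP[_ /eqP].
rewrite -(fsetD1K bS) hZ //.
- exact: (fsubsetP WZ).
- by apply: fsubset_trans (fsubD1set _ _) _; apply: fsubset_trans SW WZ.
- move=> s; rewrite !inE => /andP[ne sS]; rewrite ltn_neqAle eq_sym ne; exact: bmin.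
- by move: cS; rewrite (cardfsD1 b S) bS; lia.
Qed.

Lemma ramsey_multi d C (n : nat) q : exists N, forall X : {fset nat}, N <= #|` X| ->
  forall f : nat -> {fset nat} -> nat, (forall i, i < n -> bounded_on d C X (f i)) ->
  exists Y, [/\ Y `<=` X, #|` Y| = q & forall i, i < n -> exists c, mono_on d Y (f i) c].
Proof.
elim: n q => [|n IH] q.
  exists q => X hX f _; have [Y [YX cY]] := fsub_card hX; exists Y; split=> //.
have [Nr HNr] := ramsey d C q.
have [N HN] := IH Nr; exists N => X hX f hf.
have [Y1 [Y1X cY1 h1]] := HN X hX f (fun i ilt => hf i (ltnW ilt)).
have hb : bounded_on d C Y1 (f n).
  by move=> S SY1; apply: hf => //; apply: fsubset_trans SY1 Y1X.
have [Y [YY1 cY [c hc]]] := HNr Y1 (eq_leq (esym cY1)) (f n) hb.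
exists Y; split=> //; first exact: fsubset_trans YY1 Y1X.
move=> i; rewrite ltnS leq_eqVlt => /orP[/eqP ->|ilt]; first by exists c.
have [c' hc'] := h1 i ilt; exists c' => S SY; apply: hc'; exact: fsubset_trans SY YY1.
Qed.

Lemma size_undup_map (T1 T2 T3 : eqType) (f : T1 -> T2) (g : T1 -> T3) (L : seq T1) :
  {in L &, forall a b, (f a == f b) = (g a == g b)} ->
  size (undup (map f L)) = size (undup (map g L)).
Proof.
elim: L => [//|a L IH] H /=.
have IH' : size (undup (map f L)) = size (undup (map g L)).
  by apply: IH => u v uL vL; apply: H; rewrite inE ?uL ?vL orbT.
have -> : (f a \in map f L) = (g a \in map g L).
  apply/mapP/mapP => -[b bL e]; exists b => //; apply/eqP.
    by rewrite -H ?inE ?bL ?eqxx ?orbT // e.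
  by rewrite H ?inE ?bL ?eqxx ?orbT // e.
by case: ifP => _ //=; rewrite IH'.
Qed.

Definition rk k (x : k.-tuple nat) (i : 'I_k) := size (undup (filter (fun v => v < tnth x i) x)).

Lemma rk_otype k (x y : k.-tuple nat) i : otype x = otype y -> rk x i = rk y i.
Proof.
move=> e; have ex a b : (tnth x a < tnth x b) = (tnth y a < tnth y b).
  by move/ffunP: e => /(_ (a, b)); rewrite !ffunE.
rewrite /rk -{1}(map_tnth_enum x) -{1}(map_tnth_enum y) !filter_map.
rewrite (@eq_filter _ (preim (tnth x) (fun v => v < tnth x i)) (preim (tnth y) (fun v => v < tnth y i))); last by move=> j /=; rewrite ex.
apply: size_undup_map => a b _ _.
have e2 (z : k.-tuple nat) a' b' : (tnth z a' == tnth z b') = ~~ (tnth z a' < tnth z b') && ~~ (tnth z b' < tnth z a').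
  by rewrite -!leqNgt eqn_leq andbC.
by rewrite !e2 !ex.
Qed.

Lemma idx_count (s : seq nat) a : sorted ltn s -> a \in s -> index a s = count (fun t => t < a) s.
Proof.
elim: s => [//|b s IH] /= srt; rewrite inE.
have allb : all (fun t => b < t) s by move: srt; rewrite (path_sortedE ltn_trans) => /andP[].
have srt' : sorted ltn s by exact: path_sorted srt.
case: (a =P b) => [->|ne] /=.
  move=> _; rewrite eqxx ltnn /=; apply/esym/eqP; rewrite -leqn0 leqNgt -has_count; apply/negP.
  by case/hasP => t ts; move/allP: allb => /(_ t ts) /ltn_trans h /h; rewrite ltnn.
move=> aS; have -> : (b == a) = false by apply/negbTE/eqP => e; apply: ne.
by rewrite IH // (allP allb a aS).
Qed.

Section TR.
Variable k : nat.

Definition build (s : {ffun 'I_k -> 'I_k}) (T : {fset nat}) : k.-tuple nat :=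
  [tuple nth 0 (sort leq T) (s i) | i < k].

Definition pats := enum {ffun 'I_k -> 'I_k}.
Definition pdef : {ffun 'I_k -> 'I_k} := [ffun i => i].
Definition colf (chi : k.-tuple nat -> nat) (j : nat) (T : {fset nat}) :=
  chi (build (nth pdef pats j) T).

Lemma sort_fset_uniq (s : seq nat) : sorted leq s -> uniq s -> sort leq [fset t in s] = s.
Proof.
move=> srt u; apply: (@eq_trans _ _ (sort leq s)); last by apply: sorted_sort => //; exact: leq_trans.
apply/perm_sortP.
- exact: leq_total.
- exact: leq_trans.
- exact: anti_leq.
apply: uniq_perm => //; first exact: fset_uniq.
by move=> t; rewrite inE.
Qed.

Lemma sorted_ltn_fset (T : {fset nat}) : sorted ltn (sort leq T).
Proof.
rewrite ltn_sorted_uniq_leq sort_uniq fset_uniq /=; apply: sort_sorted; exact: leq_total.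
Qed.

Lemma tuple_ramsey c p : exists P, forall E' : {fset nat}, P <= #|` E'| ->
  forall chi : k.-tuple nat -> nat, (forall x, cube E' x -> chi x < c) ->
  exists E, [/\ E `<=` E', #|` E| = p &
    forall x y, cube E x -> cube E y -> otype x = otype y -> chi x = chi y].
Proof.
have [N HN] := ramsey_multi k c (size pats) (p + k).
exists N => E' hE' chi hchi.
have hb : forall j, j < size pats -> bounded_on k c E' (colf chi j).
  move=> j _ T TE' cT; apply: hchi; apply/forallP => i; rewrite tnth_mktuple.
  apply: (fsubsetP TE'); rewrite -(mem_sort leq); apply: mem_nth.
  by rewrite size_sort; apply: (leq_trans (ltn_ord _)); rewrite cT.
have [Y [YE' cY hY]] := HN E' hE' _ hb.
set sY := sort leq Y.
have srtY : sorted ltn sY by exact: sorted_ltn_fset.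
have uY : uniq sY by apply: sorted_uniq srtY; [exact: ltn_trans|exact: ltnn].
have szY : size sY = (p + k)%N by rewrite size_sort -cY.
set E := [fset t in take p sY].
have cE : #|` E| = p by rewrite card_fseq undup_id ?take_uniq // size_takel // szY leq_addr.
have EY : forall e, e \in E -> e \in Y by move=> e; rewrite inE => /mem_take; rewrite mem_sort.
have Elt : forall e w, e \in E -> w \in drop p sY -> e < w.
  move=> e w; rewrite inE => eE wD.
  have pw : pairwise ltn (take p sY ++ drop p sY).
    by rewrite cat_take_drop -(sorted_pairwise ltn_trans).
  by move: pw; rewrite pairwise_cat; case/and3P => /allrelP h _ _; apply: h.
exists E; split => //.
  by apply/fsubsetP => e /EY; apply: (fsubsetP YE').
(* the canonical k-set of x *)
pose sx (x : k.-tuple nat) := sort leq (undup x) ++ take (k - size (undup x)) (drop p sY).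
have cubeE : forall (x : k.-tuple nat) v, cube E x -> v \in x -> v \in E.
  by move=> x v /forallP cx /tnthP[i ->].
have Tprop : forall x, cube E x -> [/\ sorted ltn (sx x), size (sx x) = k,
    sort leq [fset t in sx x] = sx x, [fset t in sx x] `<=` Y & #|` [fset t in sx x]| = k].
  move=> x cx.
  have s1 : sorted ltn (sort leq (undup x)).
    by rewrite ltn_sorted_uniq_leq sort_uniq undup_uniq /=; apply: sort_sorted; exact: leq_total.
  have s2 : sorted ltn (take (k - size (undup x)) (drop p sY)).
    apply: subseq_sorted srtY; first exact: ltn_trans.
    apply: subseq_trans (take_subseq _ _) (drop_subseq _ _).
  have srt : sorted ltn (sx x).
    rewrite /sx (sorted_pairwise ltn_trans) pairwise_cat -!(sorted_pairwise ltn_trans) s1 s2 !andbT.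
    apply/allrelP => a b; rewrite mem_sort mem_undup => ax /mem_take bD.
    exact: Elt (cubeE x a cx ax) bD.
  have sz : size (sx x) = k.
    rewrite /sx size_cat size_sort size_takel; last by rewrite size_drop szY; lia.
    have h : size (undup x) <= k by rewrite -{2}(size_tuple x) size_undup.
    by rewrite subnKC.
  have u : uniq (sx x) by apply: sorted_uniq srt; [exact: ltn_trans|exact: ltnn].
  split => //.
  - apply: sort_fset_uniq => //; move: srt; rewrite ltn_sorted_uniq_leq => /andP[].
    by [].
  - apply/fsubsetP => t; rewrite !inE /= mem_sort mem_undup => /orP[tx|/mem_take/mem_drop].
      exact: EY (cubeE x t cx tx).
    by rewrite mem_sort.
  - by rewrite card_fseq undup_id.
have idx : forall (x : k.-tuple nat) (i : 'I_k), cube E x -> index (tnth x i) (sx x) = rk x i.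
  move=> x i cx; have xi : tnth x i \in sort leq (undup x) by rewrite mem_sort mem_undup mem_tnth.
  rewrite /sx index_cat xi idx_count //; last first.
    by rewrite ltn_sorted_uniq_leq sort_uniq undup_uniq /=; apply: sort_sorted; exact: leq_total.
  by rewrite count_sort -size_filter filter_undup.
pose rho (x : k.-tuple nat) : {ffun 'I_k -> 'I_k} := [ffun i => insubd i (rk x i)].
have rk_lt : forall (x : k.-tuple nat) (i : 'I_k), cube E x -> rk x i < k.
  move=> x i cx; have [_ sz _ _ _] := Tprop x cx; rewrite -idx // -{2}sz index_mem.
  by rewrite /sx mem_cat mem_sort mem_undup mem_tnth.
have buildE : forall x, cube E x -> build (rho x) [fset t in sx x] = x.
  move=> x cx; have [_ _ so _ _] := Tprop x cx; apply: eq_from_tnth => i.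
  rewrite tnth_mktuple so ffunE val_insubd rk_lt // -idx // nth_index //.
  by rewrite /sx mem_cat mem_sort mem_undup mem_tnth.
have rhoE : forall x y, otype x = otype y -> rho x = rho y.
  by move=> x y e; apply/ffunP => i; rewrite !ffunE (rk_otype i e).
move=> x y cx cy e.
have pin : rho x \in pats by rewrite /pats mem_enum.
set j := index (rho x) pats.
have jlt : j < size pats by rewrite index_mem.
have [c0 hc0] := hY j jlt.
have [_ _ _ sYx cTx] := Tprop x cx.
have [_ _ _ sYy cTy] := Tprop y cy.
have nj : nth pdef pats j = rho x by rewrite nth_index.
rewrite -(buildE x cx) -(buildE y cy) -(rhoE _ _ e).
have := hc0 _ sYx cTx; have := hc0 _ sYy cTy; rewrite /colf nj => -> ->.
done.
Qed.

End TR.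

Lemma cube_sub k (E E' : {fset nat}) (x : k.-tuple nat) : E `<=` E' -> cube E x -> cube E' x.
Proof. by move=> sub /forallP h; apply/forallP => i; apply: (fsubsetP sub). Qed.

Lemma regvalsP k (U : fasgn k) A E v :
  reflect (exists2 x, x \in A & [/\ cube E x, mxc (U A x) < mnc x & v = U A x])
          (v \in regvals U A E).
Proof.
apply: (iffP idP) => [/imfsetP[x /= xA ->]|[x xA [h1 h2 ->]]].
  by move: xA; rewrite inE => /andP[xA /andP[h1 h2]]; exists x.
by apply/imfsetP; exists x => //=; rewrite inE xA h1 h2.
Qed.

Lemma regvals_ot k (U : fasgn k) (A : {fset k.-tuple nat}) (E : {fset nat}) (chi : k.-tuple nat -> nat) :
  (forall x y, x \in A -> y \in A -> cube E x -> cube E y -> mxc (U A x) < mnc x ->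
     mxc (U A y) < mnc y -> chi x = chi y -> U A x = U A y) ->
  (forall x y, cube E x -> cube E y -> otype x = otype y -> chi x = chi y) ->
  #|` regvals U A E| <= ot k.
Proof.
move=> hchi hot; set R := regvals U A E.
pose Pv v := fun x => [&& cube E x, mxc (U A x) < mnc x & U A x == v].
pose w v := nth v (enum_fset A) (find (Pv v) A).
have wP : forall v, v \in R -> [/\ w v \in A, cube E (w v), mxc (U A (w v)) < mnc (w v) & U A (w v) = v].
  move=> v /regvalsP[x xA [h1 h2 ->]].
  have hs : has (Pv (U A x)) A by apply/hasP; exists x => //; rewrite /Pv h1 h2 eqxx.
  have := nth_find (U A x) hs; rewrite -/(w _) /Pv => /and3P[c1 c2 /eqP c3].
  by split=> //; rewrite /w mem_nth // -has_find.
pose h v := otype (w v).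
have inj : {in R &, injective h}.
  move=> v1 v2 v1R v2R e.
  have [a1 c1 r1 e1] := wP v1 v1R; have [a2 c2 r2 e2] := wP v2 v2R.
  by rewrite -e1 -e2; apply: hchi => //; apply: hot.
move/card_in_imfsetP: inj => /eqP <-.
pose Tset := [set f : {ffun 'I_k * 'I_k -> bool} | `[< exists x : k.-tuple nat, f = otype x >]].
apply: (@leq_trans #|` [fset t in Tset]|); last by rewrite card_finset.
apply: fsubset_leq_card; apply/fsubsetP => t /imfsetP[v /= vR ->].
by rewrite !inE; apply/asboolP; exists (w v).
Qed.

Lemma refine k p b : exists P, 0 < P /\ forall S (U : fasgn k), concl P b S U -> concl p (ot k) S U.
Proof.
have [P0 HP0] := tuple_ramsey k b.+1 p.
exists P0.+1; split => // S U [A [E' [AS cE' hE' hR]]].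
set R := regvals U A E'.
pose chi x := if (x \in A) && (mxc (U A x) < mnc x) then index (U A x) R else b.
have hb : forall x, cube E' x -> chi x < b.+1.
  move=> x cx; rewrite /chi; case: ifP => [/andP[xA h]|_]; last by [].
  have h' : index (U A x) R < size R by rewrite index_mem; apply/regvalsP; exists x.
  rewrite ltnS; apply: ltnW; exact: leq_trans h' hR.
have hP0 : P0 <= #|` E'| by rewrite cE'.
have [E [EE' cE hot]] := HP0 E' hP0 chi hb.
exists A, E; split => //.
  by move=> x /(cube_sub EE'); apply: hE'.
apply: (regvals_ot (chi := chi)) => // x y xA yA cx cy rx ry.
rewrite /chi xA yA rx ry /=.
have inR : forall z, z \in A -> cube E z -> mxc (U A z) < mnc z -> U A z \in R.
  by move=> z zA cz rz; apply/regvalsP; exists z => //; split => //; apply: cube_sub EE' cz.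
move=> e; rewrite -(nth_index (U A x) (inR _ xA cx rx)) e nth_index //.
exact: inR.
Qed.

Lemma PropA_ot lt : PropA lt kk -> PropA lt ot.
Proof.
move=> H k p k0 p0 U h1 h2; have [P [P0 HP]] := refine k p (kk k).
by apply: HP; apply: H.
Qed.

Lemma PropB_ot lt : PropB lt kk -> PropB lt ot.
Proof.
move=> H k p k0 p0; have [P [P0 HP]] := refine k p (kk k).
have [m Hm] := H k P k0 P0; exists m => n mn U h1 h2.
by apply: HP; apply: Hm.
Qed.

Lemma PropC_ot : PropC kk -> PropC ot.
Proof.
move=> H k p k0 p0 l1 l2 u1 u2 U h1 h2; have [P [P0 HP]] := refine k p (kk k).
exact: HP (H k P k0 P0 l1 l2 u1 u2 U h1 h2).
Qed.

Lemma PropD_ot : PropD kk -> PropD ot.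
Proof.
move=> H k p k0 p0; have [P [P0 HP]] := refine k p (kk k).
have [m Hm] := H k P k0 P0; exists m => n mn l1 l2 u1 u2 U h1 h2.
exact: HP (Hm n mn l1 l2 u1 u2 U h1 h2).
Qed.

Lemma regvals_ot2 k (U : fasgn k) (A : {fset k.-tuple nat}) (E : {fset nat}) :
  (forall x y, x \in A -> y \in A -> cube E x -> cube E y -> mxc (U A x) < mnc x ->
     mxc (U A y) < mnc y -> otype x = otype y -> U A x = U A y) ->
  #|` regvals U A E| <= ot k.
Proof.
move=> H; pose chi (x : k.-tuple nat) := index (otype x) (enum {ffun 'I_k * 'I_k -> bool}).
apply: (regvals_ot (chi := chi)); last by move=> x y _ _ e; rewrite /chi e.
move=> x y xA yA cx cy rx ry e; apply: H => //.
move: e; rewrite /chi => /(congr1 (nth (otype x) (enum {ffun 'I_k * 'I_k -> bool}))).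
by rewrite !nth_index ?mem_enum.
Qed.

Lemma refine_strong k p b : exists P, 0 < P /\ forall S (U : fasgn k), concl P b S U ->
  exists A E, [/\ {subset A <= S}, #|` E| = p, (forall x, cube E x -> x \in A) &
    forall x y, cube E x -> cube E y -> mxc (U A x) < mnc x -> mxc (U A y) < mnc y ->
      otype x = otype y -> U A x = U A y].
Proof.
have [P0 HP0] := tuple_ramsey k b.+1 p.
exists P0.+1; split => // S U [A [E' [AS cE' hE' hR]]].
set R := regvals U A E'.
pose chi x := if (x \in A) && (mxc (U A x) < mnc x) then index (U A x) R else b.
have hb : forall x, cube E' x -> chi x < b.+1.
  move=> x cx; rewrite /chi; case: ifP => [/andP[xA h]|_]; last by [].
  have h' : index (U A x) R < size R by rewrite index_mem; apply/regvalsP; exists x.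
  rewrite ltnS; apply: ltnW; exact: leq_trans h' hR.
have hP0 : P0 <= #|` E'| by rewrite cE'.
have [E [EE' cE hot]] := HP0 E' hP0 chi hb.
exists A, E; split => //.
  by move=> x /(cube_sub EE'); apply: hE'.
move=> x y cx cy rx ry e.
have xA : x \in A by apply: hE'; apply: cube_sub EE' cx.
have yA : y \in A by apply: hE'; apply: cube_sub EE' cy.
have := hot x y cx cy e; rewrite /chi xA yA rx ry /=.
have inR : forall z, z \in A -> cube E z -> mxc (U A z) < mnc z -> U A z \in R.
  by move=> z zA cz rz; apply/regvalsP; exists z => //; split => //; apply: cube_sub EE' cz.
move=> e'; rewrite -(nth_index (U A x) (inR _ xA cx rx)) e' nth_index //.
exact: inR.
Qed.

Section LiftSec.
Variable k : nat.
Hypothesis k0 : 0 < k.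
Implicit Types x y : k.-tuple nat.

Definition lft (x : k.-tuple nat) : k.+1.-tuple nat := cons_tuple (@mxc k x) x.
Definition unl (y : k.+1.-tuple nat) : k.-tuple nat := behead_tuple y.
Definition diag (y : k.+1.-tuple nat) := y == lft (unl y).
Definition Dset (A : {fset k.+1.-tuple nat}) : {fset k.-tuple nat} :=
  [fset unl y | y in A & diag y].

Lemma unlK x : unl (lft x) = x.
Proof. by apply: val_inj. Qed.

Lemma diag_lft x : diag (lft x).
Proof. by rewrite /diag unlK. Qed.

Lemma lft_inj : injective lft.
Proof. by move=> x y /(congr1 unl); rewrite !unlK. Qed.

Lemma in_Dset A x : (x \in Dset A) = (lft x \in A).
Proof.
apply/imfsetP/idP => [[y /= yA ->]|xA].
  by move: yA; rewrite inE => /andP[yA /eqP <-].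
by exists (lft x); rewrite ?unlK // inE xA diag_lft.
Qed.

Lemma Dset_U1 A (x : k.+1.-tuple nat) : Dset (x |` A) = if diag x then unl x |` Dset A else Dset A.
Proof.
apply/fsetP => z; rewrite in_Dset in_fset1U; case: ifP => dx.
  rewrite in_fset1U in_Dset; congr orb; apply/eqP/eqP => [e|->].
    by rewrite -e unlK.
  by apply/eqP; rewrite eq_sym.
rewrite in_Dset; case: eqP => // e; move: dx; by rewrite -e diag_lft.
Qed.

Lemma tnth_lft0 x : tnth (lft x) ord0 = mxc x.
Proof. exact: tnth0. Qed.
Lemma tnth_lftS x i : tnth (lft x) (lift ord0 i) = tnth x i.
Proof. exact: tnthS. Qed.

Lemma le_mxc x i : tnth x i <= mxc x.
Proof. exact: (leq_bigmax_cond (F := fun i => tnth x i)). Qed.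

Lemma mnc_le_mxc x : mnc x <= mxc x.
Proof.
rewrite /mnc; apply: (big_rec (fun v => v <= mxc x)) => // i v _ h.
exact: leq_trans (geq_minr _ _) h.
Qed.

Lemma mxc_lft x : mxc (lft x) = mxc x.
Proof.
rewrite {1}/mxc big_ord_recl tnth_lft0.
under eq_bigr do rewrite tnth_lftS.
by rewrite -/(mxc x) maxnn.
Qed.

Lemma mnc_lft x : mnc (lft x) = mnc x.
Proof.
rewrite {1}/mnc mxc_lft big_ord_recl tnth_lft0.
under eq_bigr do rewrite tnth_lftS.
by rewrite -/(mnc x); apply/minn_idPr; exact: mnc_le_mxc.
Qed.

Lemma lt_mxc x a : (a < mxc x) = [exists j, a < tnth x j].
Proof.
apply/idP/idP => [h|/existsP[j hj]]; last exact: leq_trans hj (le_mxc x j).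
case: (boolP [exists j, a < tnth x j]) => // /existsPn hall.
exfalso; move: h; rewrite ltnNge => /negP; apply; apply/bigmax_leqP => j _.
by rewrite leqNgt hall.
Qed.

Lemma mxc_attained x : exists i, mxc x = tnth x i.
Proof.
have c0 : 0 < #|'I_k| by rewrite card_ord.
have [i0 h] := @eq_bigmax _ (fun i => tnth x i) c0.
by exists i0.
Qed.

Lemma cube_lft E x : cube E x -> cube E (lft x).
Proof.
move=> /forallP cx; apply/forallP => i.
case: (unliftP ord0 i) => [j|] ->; first by rewrite tnth_lftS.
by rewrite tnth_lft0; have [j ->] := mxc_attained x.
Qed.

Lemma otype_lft x y : otype x = otype y -> otype (lft x) = otype (lft y).
Proof.
move=> e; have ex a b : (tnth x a < tnth x b) = (tnth y a < tnth y b).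
  by move/ffunP: e => /(_ (a, b)); rewrite !ffunE.
apply/ffunP => -[i j]; rewrite !ffunE /=.
case: (unliftP ord0 i) => [i'|] ->; case: (unliftP ord0 j) => [j'|] ->;
  rewrite ?tnth_lftS ?tnth_lft0 ?ltnn //.
- by rewrite !lt_mxc; apply: eq_existsb => l; rewrite ex.
- by rewrite !ltnNge !le_mxc.
Qed.

Lemma lex_lft x y : mxc x < mxc y -> lex_lt k.+1 (lft x) (lft y).
Proof.
move=> h; apply/lex_ltP; exists ord0; split; last by rewrite !tnth_lft0.
by move=> j; rewrite ltn0.
Qed.

Definition Uprime (U : fasgn k) : fasgn k.+1 :=
  fun A (y : k.+1.-tuple nat) => if diag y then lft (U (Dset A) (unl y)) else y.

Lemma Uprime_fa U : is_fa predT U -> is_fa predT (Uprime U).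
Proof.
move=> H A _ y yA; rewrite /Uprime; case: ifP => // dy.
rewrite -in_Dset; apply: H => //.
by rewrite in_Dset -(eqP dy).
Qed.

Lemma Uprime_dec U : ord_dec predT (hash_lt k) (hash_lt k) U ->
  ord_dec predT (lex_lt k.+1) (lex_lt k.+1) (Uprime U).
Proof.
move=> H A _ x _; rewrite /graph_sub /Uprime Dset_U1.
case: ifP => dx; last by left.
have [gs|[y yD [h1 h2]]] := H (Dset A) (fun _ _ => isT) (unl x) isT.
  left => y yA; case: ifP => // dy; congr lft; apply: gs.
  by rewrite in_Dset -(eqP dy).
right; exists (lft y); first by rewrite -in_Dset.
rewrite diag_lft unlK; split.
  by rewrite (eqP dx); apply: lex_lft.
exact: lex_lft.
Qed.

End LiftSec.

Lemma PropA_lex_hash : PropA lex_lt kk -> PropA hash_lt kk.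
Proof.
move=> H k p k0 p0 U hfa hdec.
have [P [P0 HP]] := refine_strong k.+1 p (kk k.+1).
have := H k.+1 P (ltn0Sn _) P0 (Uprime U) (Uprime_fa hfa) (Uprime_dec hdec).
move=> /HP [A [E [_ cE hA hty]]].
exists (Dset A), E; split => //.
  by move=> x cx; rewrite in_Dset; apply: hA; apply: cube_lft.
apply: leq_trans (ot_le_kk k); apply: regvals_ot2 => x y xD yD cx cy rx ry e.
have := hty (lft x) (lft y) (cube_lft k0 cx) (cube_lft k0 cy).
rewrite /Uprime !diag_lft !unlK !mxc_lft !mnc_lft => /(_ rx ry (otype_lft e)).
exact: lft_inj.
Qed.

Definition inf (I : nat -> Prop) := forall M, exists m, M <= m /\ I m.

Lemma pig1 (I : nat -> Prop) (q : nat -> nat) B :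
  inf I -> (forall m, I m -> q m < B) -> exists v, inf (fun m => I m /\ q m = v).
Proof.
elim: B I => [|B IH] I hI hq.
  by have [m [_ Im]] := hI 0; have := hq m Im.
case: (classic (inf (fun m => I m /\ q m = B))) => [h|h]; first by exists B.
have [M hM] := not_all_ex_not _ _ h.
have hM' := not_ex_all_not _ _ hM.
have i1 : inf (fun m => I m /\ M <= m).
  move=> M'; have [m [Mm Im]] := hI (maxn M M'); exists m.
  by move: Mm; rewrite geq_max => /andP[h1 h2].
have i2 : forall m, I m /\ M <= m -> q m < B.
  move=> m [Im Mm]; have := hq m Im; rewrite ltnS leq_eqVlt => /orP[/eqP e|//].
  by exfalso; apply: (hM' m).
have [v hv] := IH (fun m => I m /\ M <= m) i1 i2.
exists v => M'; have [m [Mm [[Im _] qm]]] := hv M'; by exists m.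
Qed.

Lemma pigL (T : eqType) (L : seq T) (Q : T -> nat -> nat) B (I : nat -> Prop) :
  inf I -> (forall t m, I m -> Q t m < B) ->
  exists I' : nat -> Prop, [/\ inf I', (forall m, I' m -> I m) &
    forall t, t \in L -> forall m m', I' m -> I' m' -> Q t m = Q t m'].
Proof.
elim: L I => [|t L IH] I hI hQ.
  by exists I; split.
have [v hv] := pig1 (q := Q t) hI (fun m Im => hQ t m Im).
have [I' [hI' sub hc]] := IH _ hv (fun t' m h => hQ t' m (proj1 h)).
exists I'; split => //; first by move=> m /sub [].
move=> t'; rewrite inE => /orP[/eqP ->|tL] m m' h h'; last exact: hc.
by have [_ ->] := sub m h; have [_ ->] := sub m' h'.
Qed.

Section Compact.
Variables (k p bnd : nat).
Variables (N : nat -> nat) (L1 L2 : nat -> rel (k.-tuple nat)) (UU : nat -> fasgn k).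
Hypotheses (hN : forall m, m <= N m)
  (hu1 : forall m, upward_on (inbox (N m) k) (L1 m))
  (hu2 : forall m, upward_on (inbox (N m) k) (L2 m))
  (hfa : forall m, is_fa (inbox (N m) k) (UU m))
  (hdec : forall m, ord_dec (inbox (N m) k) (L1 m) (L2 m) (UU m))
  (hnc : forall m, ~ concl p bnd (inbox (N m) k) (UU m)).

Lemma inbox_mono j n x : j <= n -> inbox j k x -> inbox n k x.
Proof. by move=> jn /forallP h; apply/forallP => i; apply: leq_trans (h i) jn. Qed.

Definition tup j (s : k.-tuple 'I_j) : k.-tuple nat := map_tuple (@nat_of_ord j) s.

Lemma tup_box j s : inbox j k (@tup j s).
Proof. by apply/forallP => i; rewrite tnth_map. Qed.

Lemma tup_surj j x : inbox j k x -> exists s, x = @tup j s.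
Proof.
move=> /forallP h; exists [tuple Ordinal (h i) | i < k].
by apply: eq_from_tnth => i; rewrite tnth_map tnth_mktuple.
Qed.

Definition tupset j (S : {set k.-tuple 'I_j}) : {fset k.-tuple nat} := [fset @tup j s | s in S].

Lemma tupset_surj j A : (forall z, z \in A -> inbox j k z) -> exists S, A = @tupset j S.
Proof.
move=> h; exists [set s | tup s \in A]; apply/fsetP => z; apply/idP/imfsetP => [zA|[s sS ->]].
  have [s e] := tup_surj (h z zA); exists s; rewrite ?inE -?e //.
by move: sS; rewrite /= !inE.
Qed.

Definition agree j m m' :=
  (forall x y, inbox j k x -> inbox j k y -> L1 m x y = L1 m' x y /\ L2 m x y = L2 m' x y) /\
  (forall A y, (forall z, z \in A -> inbox j k z) -> y \in A -> UU m A y = UU m' A y).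

Lemma refine_level j I : 0 < j -> inf I -> (forall m, I m -> j <= m) ->
  exists I' : nat -> Prop, [/\ inf I', (forall m, I' m -> I m) &
    forall m m', I' m -> I' m' -> agree j m m'].
Proof.
move=> j0 hI hIj.
pose T1 := (k.-tuple 'I_j * k.-tuple 'I_j)%type.
have [I1 [hI1 s1 c1]] := @pigL _ (enum {: T1})
  (fun t m => nat_of_bool (L1 m (tup t.1) (tup t.2))) 2 I hI (fun t m _ => leq_b1 _).
have [I2 [hI2 s2 c2]] := @pigL _ (enum {: T1})
  (fun t m => nat_of_bool (L2 m (tup t.1) (tup t.2))) 2 I1 hI1 (fun t m _ => leq_b1 _).
pose T3 := ({set k.-tuple 'I_j} * k.-tuple 'I_j * 'I_k)%type.
pose Q3 (t : T3) m := if tup t.1.2 \in tupset t.1.1 then tnth (UU m (tupset t.1.1) (tup t.1.2)) t.2 else 0.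
have b3 : forall t m, I2 m -> Q3 t m < j.
  move=> [[S s] i] m I2m; rewrite /Q3 /=; case: ifP => // sin.
  have jm : j <= N m by apply: leq_trans (hIj m (s1 m (s2 m I2m))) (hN m).
  have : UU m (tupset S) (tup s) \in tupset S.
    apply: hfa => // z /imfsetP[s' _ ->]; apply: inbox_mono jm _; exact: tup_box.
  case/imfsetP => s' _ ->; rewrite tnth_map; exact: ltn_ord.
have [I3 [hI3 s3 c3]] := @pigL _ (enum {: T3}) Q3 j I2 hI2 b3.
exists I3; split => //; first by move=> m /s3 /s2 /s1.
move=> m m' h h'; split.
  move=> x y /tup_surj[s ->] /tup_surj[t ->]; split.
    have := c1 (s, t) (mem_enum _ _) m m' (s2 _ (s3 _ h)) (s2 _ (s3 _ h')).
    by case: (L1 m _ _); case: (L1 m' _ _).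
  have := c2 (s, t) (mem_enum _ _) m m' (s3 _ h) (s3 _ h').
  by case: (L2 m _ _); case: (L2 m' _ _).
move=> A y hA yA; have [S eS] := tupset_surj hA; have [s ey] := tup_surj (hA y yA).
subst A y; apply: eq_from_tnth => i.
have := c3 (S, s, i) (mem_enum _ _) m m' h h'; by rewrite /Q3 /= yA.
Qed.

Definition cspec j (I I' : nat -> Prop) := [/\ inf I', (forall m, I' m -> I m /\ j <= m) &
  forall m m', I' m -> I' m' -> agree j m m'].
Definition refineF j I := epsilon (inhabits (fun _ : nat => True)) (cspec j I).
Fixpoint chain j := if j is j'.+1 then refineF j'.+1 (chain j') else (fun _ => True).

Lemma chainS j : inf (chain j) -> cspec j.+1 (chain j) (chain j.+1).
Proof.
move=> hI; apply: (epsilon_spec (inhabits (fun _ : nat => True)) (cspec j.+1 (chain j))).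
have i1 : inf (fun m => chain j m /\ j.+1 <= m).
  move=> M; have [m [Mm cm]] := hI (maxn M j.+1); exists m.
  by move: Mm; rewrite geq_max => /andP[h1 h2].
have [I' [hI' sub ag]] := @refine_level j.+1 _ (ltn0Sn _) i1 (fun m h => proj2 h).
by exists I'; split.
Qed.

Lemma chain_inf j : inf (chain j).
Proof.
elim: j => [|j IH]; first by move=> M; exists M.
by case: (chainS IH).
Qed.

Lemma chain_sub j j' m : j' <= j -> chain j m -> chain j' m.
Proof.
elim: j => [|j IH]; first by rewrite leqn0 => /eqP ->.
rewrite leq_eqVlt => /orP[/eqP -> //|]; rewrite ltnS => jj cm; apply: IH => //.
by case: (chainS (chain_inf j)) => _ /(_ m cm) [].
Qed.

Lemma chain_ge j m : chain j m -> j <= m.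
Proof.
case: j => // j cm; by case: (chainS (chain_inf j)) => _ /(_ m cm) [].
Qed.

Lemma chain_agree j m m' : 0 < j -> chain j m -> chain j m' -> agree j m m'.
Proof.
case: j => // j _ cm cm'; by case: (chainS (chain_inf j)) => _ _; apply.
Qed.

Definition pickc j := epsilon (inhabits 0) (fun m => chain j m).

Lemma pickc_in j : chain j (pickc j).
Proof.
apply: (epsilon_spec (inhabits 0) (fun m => chain j m)).
by have [m [_ h]] := chain_inf j 0; exists m.
Qed.

Lemma agree_pickc j j' m : 0 < j' -> j' <= j -> chain j m -> agree j' (pickc j') m.
Proof.
move=> j0 jj cm; apply: chain_agree => //; first exact: pickc_in.
exact: chain_sub jj cm.
Qed.

Lemma box_of_mxc j x : mxc x < j -> inbox j k x.
Proof.
move=> h; apply/forallP => i; apply: leq_ltn_trans h.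
exact: (leq_bigmax_cond (F := fun i => tnth x i)).
Qed.

Lemma box_N j m x : chain j m -> inbox j k x -> inbox (N m) k x.
Proof. move=> cm; apply: inbox_mono; exact: leq_trans (chain_ge cm) (hN m). Qed.

Definition lvl2 (x y : k.-tuple nat) := (maxn (mxc x) (mxc y)).+1.
Definition lvlA (A : {fset k.-tuple nat}) := (\max_(a <- A) mxc a).+1.

Lemma in_lvlA A a : a \in A -> mxc a < lvlA A.
Proof. by move=> aA; rewrite ltnS; apply: (leq_bigmax_seq (F := fun a => mxc a)). Qed.

Lemma lvlA_sub A B : A `<=` B -> lvlA A <= lvlA B.
Proof.
move=> sub; rewrite ltnS; apply/bigmax_leqP_seq => a aA _.
rewrite -ltnS; apply: in_lvlA; exact: (fsubsetP sub).
Qed.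

Definition L1l x y := L1 (pickc (lvl2 x y)) x y.
Definition L2l x y := L2 (pickc (lvl2 x y)) x y.
Definition Ul : fasgn k := fun A y => UU (pickc (lvlA A)) A y.

Lemma E1 j m x y : lvl2 x y <= j -> chain j m -> L1l x y = L1 m x y /\ L2l x y = L2 m x y.
Proof.
move=> lj cm; have [h _] := agree_pickc (ltn0Sn _) lj cm.
apply: h; apply: box_of_mxc; rewrite /lvl2 ltnS ?leq_maxl ?leq_maxr //.
Qed.

Lemma E2 j m A y : lvlA A <= j -> chain j m -> y \in A -> Ul A y = UU m A y.
Proof.
move=> lj cm yA; have [_ h] := agree_pickc (ltn0Sn _) lj cm.
apply: h => // z zA; apply: box_of_mxc; exact: in_lvlA.
Qed.

Lemma upward_limit (Lr : nat -> rel (k.-tuple nat)) (Ll : rel (k.-tuple nat)) :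
  (forall m, upward_on (inbox (N m) k) (Lr m)) ->
  (forall j m x y, lvl2 x y <= j -> chain j m -> Ll x y = Lr m x y) ->
  upward_on predT Ll.
Proof.
move=> hu hE.
have bx : forall j m x, chain j m -> mxc x < j -> inbox (N m) k x.
  by move=> j m x cm h; apply: box_N cm _; apply: box_of_mxc.
split; first split.
- move=> x _; set j := lvl2 x x; have cm := pickc_in j.
  rewrite (hE j (pickc j)) //; have [[h _] _] := hu (pickc j); apply: h.
  by apply: bx cm _; rewrite /j /lvl2 ltnS leq_maxl.
- move=> x y z _ _ _; set j := (maxn (mxc x) (maxn (mxc y) (mxc z))).+1.
  have cm := pickc_in j.
  have lx : mxc x < j by rewrite ltnS leq_maxl.
  have ly : mxc y < j by rewrite ltnS (leq_trans (leq_maxl _ (mxc z))) ?leq_maxr.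
  have lz : mxc z < j by rewrite ltnS (leq_trans (leq_maxr (mxc y) _)) ?leq_maxr.
  have l2 : forall a b, mxc a < j -> mxc b < j -> lvl2 a b <= j.
    by move=> a b ha hb; rewrite /lvl2 gtn_max ha hb.
  rewrite !(hE j (pickc j)) //; try exact: l2.
  have [[_ h] _] := hu (pickc j); apply: h; exact: bx cm _.
- move=> x y _ _ cxy; set j := lvl2 y x; have cm := pickc_in j.
  rewrite (hE j (pickc j)) //; have [_ h] := hu (pickc j); apply: h => //.
  + by apply: bx cm _; rewrite /j /lvl2 ltnS leq_maxr.
  + by apply: bx cm _; rewrite /j /lvl2 ltnS leq_maxl.
Qed.

Lemma limit_exists : exists lt1 lt2 (U : fasgn k), [/\ upward_on predT lt1, upward_on predT lt2,
  is_fa predT U, ord_dec predT lt1 lt2 U & ~ concl p bnd predT U].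
Proof.
exists L1l, L2l, Ul; split.
- apply: (upward_limit hu1) => j m x y lj cm; exact: (proj1 (E1 lj cm)).
- apply: (upward_limit hu2) => j m x y lj cm; exact: (proj2 (E1 lj cm)).
- move=> A _ y yA; rewrite /Ul; set j := lvlA A; have cm := pickc_in j.
  apply: hfa => // z zA; apply: box_N cm _; apply: box_of_mxc; exact: in_lvlA.
- move=> A _ x _; set j := lvlA (x |` A); have cm := pickc_in j.
  set m := pickc j.
  have boxA : forall z, z \in x |` A -> inbox (N m) k z.
    by move=> z zA; apply: box_N cm _; apply: box_of_mxc; exact: in_lvlA.
  have AxA : A `<=` x |` A by exact: fsubsetU1.
  have lA : lvlA A <= j by exact: lvlA_sub.
  have [gs|[y yA [h1 h2]]] := hdec (A := A) (fun z zA => boxA z (fsubsetP AxA z zA)) (boxA x (fset1U1 _ _)).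
    left => y yA; rewrite (E2 lA cm yA) (E2 (leqnn _) cm) ?gs //.
    exact: (fsubsetP AxA).
  right; exists y => //.
  have yxA : y \in x |` A by exact: (fsubsetP AxA).
  have l2 : forall a b, a \in x |` A -> b \in x |` A -> lvl2 a b <= j.
    by move=> a b ha hb; rewrite /lvl2 gtn_max !in_lvlA.
  rewrite (proj1 (E1 (l2 _ _ (fset1U1 _ _) yxA) cm)) (E2 lA cm yA) (E2 (leqnn _) cm yxA).
  split => //.
  rewrite (proj2 (E1 _ cm)) //; apply: l2.
  + by apply: hfa => //; exact: boxA.
  + apply: (fsubsetP AxA); apply: hfa => // z zA; apply: boxA; exact: (fsubsetP AxA).
- move=> [A [E [_ cE hA hR]]]; set j := lvlA A; have cm := pickc_in j.
  apply: (hnc (m := pickc j)); exists A, E; split => //.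
  by move=> z zA; apply: box_N cm _; apply: box_of_mxc; exact: in_lvlA.
Qed.

End Compact.

Lemma PropC_D b : PropC b -> PropD b.
Proof.
move=> HC k p k0 p0; apply: NNPP => hno.
pose T := (nat * rel (k.-tuple nat) * rel (k.-tuple nat) * fasgn k)%type.
pose good m (s : T) := m <= s.1.1.1 /\ [/\ upward_on (inbox s.1.1.1 k) s.1.1.2,
  upward_on (inbox s.1.1.1 k) s.1.2, is_fa (inbox s.1.1.1 k) s.2,
  ord_dec (inbox s.1.1.1 k) s.1.1.2 s.1.2 s.2 & ~ concl p (b k) (inbox s.1.1.1 k) s.2].
have H : forall m, exists s, good m s.
  move=> m; apply: NNPP => hm; apply: hno; exists m => n mn lt1 lt2 u1 u2 U h1 h2.
  apply: NNPP => hc; apply: hm; exists (n, lt1, lt2, U); split => //.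
pose sel m := proj1_sig (constructive_indefinite_description _ (H m)).
have hs : forall m, good m (sel m) by move=> m; exact: proj2_sig (constructive_indefinite_description _ (H m)).
have [lt1 [lt2 [U [u1 u2 hfa hdec hnc]]]] := @limit_exists k p (b k)
  (fun m => (sel m).1.1.1) (fun m => (sel m).1.1.2) (fun m => (sel m).1.2) (fun m => (sel m).2)
  (fun m => proj1 (hs m))
  (fun m => let: conj _ (And5 h _ _ _ _) := hs m in h)
  (fun m => let: conj _ (And5 _ h _ _ _) := hs m in h)
  (fun m => let: conj _ (And5 _ _ h _ _) := hs m in h)
  (fun m => let: conj _ (And5 _ _ _ h _) := hs m in h)
  (fun m => let: conj _ (And5 _ _ _ _ h) := hs m in h).
exact: hnc (HC k p k0 p0 lt1 lt2 u1 u2 U hfa hdec).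
Qed.

Theorem theorem3p14 :
  (* Proposition C implies all forms *)
  (PropC kk ->
     PropA hash_lt kk /\ PropA lex_lt kk /\ PropB hash_lt kk /\ PropB lex_lt kk /\
     PropC kk /\ PropD kk) /\
  (* Proposition A (#-decreasing) is implied by each form *)
  ((PropA hash_lt kk -> PropA hash_lt kk) /\ (PropA lex_lt kk -> PropA hash_lt kk) /\
   (PropB hash_lt kk -> PropA hash_lt kk) /\ (PropB lex_lt kk -> PropA hash_lt kk) /\
   (PropC kk -> PropA hash_lt kk) /\ (PropD kk -> PropA hash_lt kk)) /\
  (* each form is equivalent to its ot(k) version *)
  ((PropA hash_lt kk <-> PropA hash_lt ot) /\ (PropA lex_lt kk <-> PropA lex_lt ot) /\
   (PropB hash_lt kk <-> PropB hash_lt ot) /\ (PropB lex_lt kk <-> PropB lex_lt ot) /\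
   (PropC kk <-> PropC ot) /\ (PropD kk <-> PropD ot)).
Proof.
split; [|split].
- move=> HC; have HD := PropC_D HC.
  split; first exact: PropC_A_hash HC.
  split; first exact: PropC_A_lex HC.
  split; first exact: PropD_B_hash HD.
  split; first exact: PropD_B_lex HD.
  by split.
- split; first by [].
  split; first exact: PropA_lex_hash.
  split; first exact: PropB_A.
  split; first by move=> H; apply: PropA_lex_hash; apply: PropB_A.
  split; first exact: PropC_A_hash.
  by move=> H; apply: PropC_A_hash; apply: PropD_C.
- have m := ot_le_kk.
  split; first by split; [apply: PropA_ot|apply: PropA_mono].
  split; first by split; [apply: PropA_ot|apply: PropA_mono].
  split; first by split; [apply: PropB_ot|apply: PropB_mono].
  split; first by split; [apply: PropB_ot|apply: PropB_mono].
  split; first by split; [apply: PropC_ot|apply: PropC_mono].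
  by split; [apply: PropD_ot|apply: PropD_mono].
Qed.
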